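(* Let $X$ be an infinite-dimensional Polish topological vector space, $\mathcal F\subset2^{\mathbb N}$ a Furstenberg family, and $T\in\mathfrak L(X)$ hereditarily $\mathcal F$-hypercyclic. Then for every countable family $(A_i)_{i\in I}\subset\mathcal F$ and every family $(V_i)_{i\in I}$ of non-empty open subsets of $X$, the set of $x\in X$ such that $\mathcal N_T(x,V_i)\cap A_i\in\mathcal F$ for all $i\in I$ is dense in $X$.
   Context: A Furstenberg family is a family of non-empty subsets of $\mathbb N$ hereditary upwards. $\mathcal N_T(x,V):=\{n\in\mathbb N:T^nx\in V\}$. $T$ is hereditarily $\mathcal F$-hypercyclic if for every countable family $(V_i)_{i\in I}$ of non-empty open sets and every family $(A_i)_{i\in I}\subset\mathcal F$, there exists $x$ with $\mathcal N_T(x,V_i)\cap A_i\in\mathcal F$ for all $i\in I$. *)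

(* Defs.v *)
From HB Require Import structures.
From mathcomp Require Import all_boot all_order all_algebra.
From mathcomp Require Import all_classical all_reals all_analysis.
Set Implicit Arguments. Unset Strict Implicit. Unset Printing Implicit Defensive.
Import Order.TTheory GRing.Theory Num.Theory.
Local Open Scope classical_set_scope.
Local Open Scope ring_scope.

Definition furstenberg_family (F : set (set nat)) : Prop :=
  (forall A, F A -> A !=set0) /\ (forall A B, F A -> A `<=` B -> F B).

Definition return_set (X : Type) (T : X -> X) (x : X) (V : set X) : set nat :=
  [set n | V (iter n T x)].

Definition hereditarily_F_hypercyclic (X : topologicalType) (F : set (set nat))
    (T : X -> X) : Prop :=
  forall (I : Type) (V : I -> set X) (A : I -> set nat),
    countable [set: I] ->
    (forall i, open (V i) /\ V i !=set0) ->
    (forall i, F (A i)) ->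
    exists x : X, forall i, F (return_set T x (V i) `&` A i).

Definition is_metric (R : realType) (X : Type) (d : X -> X -> R) : Prop :=
  (forall x y, 0 <= d x y) /\ (forall x y, d x y = 0 <-> x = y) /\
  (forall x y, d x y = d y x) /\ (forall x y z, d x z <= d x y + d y z).

Definition metric_induces_topology (R : realType) (X : topologicalType)
    (d : X -> X -> R) : Prop :=
  forall U : set X, open U <->
    (forall x, U x -> exists2 e : R, 0 < e & [set y | d x y < e] `<=` U).

Definition metric_complete (R : realType) (X : topologicalType)
    (d : X -> X -> R) : Prop :=
  forall u : nat -> X,
    (forall e : R, 0 < e -> exists N, forall m n, (N <= m)%N -> (N <= n)%N -> d (u m) (u n) < e) ->
    exists l : X, u @ \oo --> l.

Definition polish (R : realType) (X : topologicalType) : Prop :=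
  (exists D : set X, countable D /\ dense D) /\
  (exists d : X -> X -> R, is_metric d /\ metric_induces_topology d /\ metric_complete d).

Definition infinite_dimensional (K : pzRingType) (X : lmodType K) : Prop :=
  forall (n : nat) (v : 'I_n -> X), exists x : X,
    ~ exists c : 'I_n -> K, x = \sum_(i < n) c i *: v i.

(* Main.v *)
Require Import Defs.
From HB Require Import structures.
From mathcomp Require Import all_boot all_order all_algebra.
From mathcomp Require Import all_classical all_reals all_analysis.
Import Order.TTheory GRing.Theory Num.Theory.
Local Open Scope classical_set_scope.
Local Open Scope ring_scope.
Set Implicit Arguments. Unset Strict Implicit.

Lemma two_pts (R : realType) (X : topologicalLmodType R^o) (U : set X) (p v : X) :
  open U -> U p -> v != 0 -> exists2 q, U q & q != p.
Proof.
move=> oU Up v0.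
have hc : {for 0, continuous (fun t : R^o => p + t *: v)}.
  have h := @continuous_comp _ _ _ (fun t : R^o => (p, t *: v)) (fun z : X * X => z.1 + z.2) 0.
  apply: h; last exact: add_continuous.
  apply: cvg_pair; first exact: cvg_cst.
  have h := @continuous_comp _ _ _ (fun t : R^o => (t, v)) (fun z : (R^o)^o * X => z.1 *: z.2) 0.
  apply: h; last exact: scale_continuous.
  by apply: (@cvg_pair _ _ _ _ (nbhs (0 : R^o))); [exact: cvg_id|exact: cvg_cst].
have : nbhs (0:R^o) [set t : R^o | U (p + t *: v)].
  apply: hc => /=; rewrite scale0r addr0.
  by move: oU; rewrite openE => /(_ p Up).
move=> /nbhs_ballP[e /= e0 he].
exists (p + (e/2) *: v).
  apply: he; rewrite /ball /= sub0r normrN ger0_norm ?divr_ge0 ?ltW//.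
  by rewrite ltr_pdivrMr// ltr_pMr// ltr1n.
apply/negP => /eqP /(congr1 (fun y => y - p)).
rewrite addrAC !subrr add0r => /eqP; rewrite scaler_eq0 (negbTE v0) orbF.
by rewrite mulf_eq0 invr_eq0 pnatr_eq0 orbF gt_eqF.
Qed.

Section Met.
Variables (R : realType) (X : topologicalType) (d : X -> X -> R).
Hypotheses (md : is_metric d) (mt : metric_induces_topology d).

Lemma ball_open a e : open [set y | d a y < e].
Proof.
apply/mt => x /= hx; exists (e - d a x); first by rewrite subr_gt0.
move=> y /= hy; case: md => _ [_ [_ tri]].
by apply: le_lt_trans (tri a x y) _; rewrite -ltrBrDl.
Qed.

Lemma sep a b : a != b -> exists2 r : R, 0 < r &
  [set y | d a y < r] `&` [set y | d b y < r] = set0.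
Proof.
move=> ab; case: md => pos [eq0 [sym tri]].
have hab : 0 < d a b.
  rewrite lt_def pos andbT; apply/eqP => /eq0 /eqP; exact/negP.
exists (d a b / 2); first by rewrite divr_gt0.
apply/seteqP; split => // y /= [h1 h2].
have := tri a y b; rewrite (sym y b).
have : d a y + d b y < d a b / 2 + d a b / 2 by rewrite ltrD.
rewrite -splitr => h3 h4; have := lt_le_trans h3 h4; by rewrite ltxx.
Qed.

End Met.

Definition disj_fam (X : topologicalType) :=
  forall n (U : set X), open U -> U !=set0 -> exists f : nat -> set X,
  (forall k, (k < n)%N -> [/\ open (f k), f k !=set0 & f k `<=` U]) /\
  (forall j k, (j < n)%N -> (k < n)%N -> j != k -> f j `&` f k = set0).

Lemma disjP (R : realType) (X : topologicalLmodType R^o) (d : X -> X -> R) :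
  is_metric d -> metric_induces_topology d -> (exists v : X, v != 0) -> disj_fam X.
Proof.
move=> md mt [v v0]; elim=> [|n IH] U oU [p Up].
  by exists (fun _ => set0); split.
have [q Uq qp] := two_pts oU Up v0.
have [r r0 hr] := sep md qp.
have dxx : forall x, d x x = 0 by move=> x; case: md => _ [h _]; apply/h.
set Ua := U `&` [set y | d q y < r]; set Ub := U `&` [set y | d p y < r].
have oUa : open Ua by apply: openI => //; exact: ball_open.
have oUb : open Ub by apply: openI => //; exact: ball_open.
have [f [hf hd]] := IH Ub oUb (ex_intro _ p (conj Up (eq_ind_r (fun z => z < r) r0 (dxx p)))).
exists (fun k => if k == n then Ua else f k); split.
  move=> k; rewrite ltnS leq_eqVlt; case: eqP => [_ _|_ /= kn].
    split=> //; last by move=> y [].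
    by exists q; split => //=; rewrite dxx.
  by have [h1 h2 h3] := hf k kn; split => // y /h3 [].
have key : forall k, (k < n)%N -> Ua `&` f k = set0.
  move=> k kn; apply/seteqP; split => // y [[_ h1]] h2.
  have [_ _ h3] := hf k kn; have [_ h4] := h3 y h2.
  have : ([set y | d q y < r] `&` [set y | d p y < r]) y by split.
  by rewrite hr => -[].
move=> j k; rewrite !ltnS => jn1 kn1 jk.
have lt_of : forall a, (a <= n)%N -> a != n -> (a < n)%N.
  by move=> a h1 h2; rewrite ltn_neqAle h2.
case: (eqVneq j n) => [ejn|jn]; case: (eqVneq k n) => [ekn|kn].
- by subst j k; rewrite eqxx in jk.
- subst j; rewrite ?eqxx ?(negbTE kn) /=; exact: key (lt_of _ kn1 kn).
- subst k; rewrite ?eqxx ?(negbTE jn) /= setIC; exact: key (lt_of _ jn1 jn).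
- rewrite ?(negbTE jn) ?(negbTE kn) /=; exact: hd (lt_of _ jn1 jn) (lt_of _ kn1 kn) jk.
Qed.

Lemma rangeP (X : topologicalType) (T : X -> X) F :
  furstenberg_family F -> hereditarily_F_hypercyclic F T -> disj_fam X ->
  forall n V A, open V -> V !=set0 -> F A -> exists z, V (iter n T z).
Proof.
move=> [fne _] hh H n V A oV V0 FA.
have [f [hf hd]] := H n.+1 V oV V0.
have [x hx] := hh 'I_n.+1 (fun k => f k) (fun _ => A) (countableP _)
  (fun k => let: And3 a b _ := hf k (ltn_ord k) in conj a b) (fun _ => FA).
have hm : forall k : 'I_n.+1, exists m, f k (iter m T x).
  by move=> k; have [m [fm _]] := fne _ (hx k); exists m.
have [m hmk] := choice hm.
case: (pselect (exists k : 'I_n.+1, (n <= m k)%N)) => [[k nk]|nok].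
  exists (iter (m k - n) T x); rewrite -iterD subnKC //.
  by have [_ _ h3] := hf k (ltn_ord k); apply: h3; apply: hmk.
have mlt : forall k : 'I_n.+1, (m k < n)%N.
  by move=> k; rewrite ltnNge; apply/negP => h; apply: nok; exists k.
have hinj : injective (fun k : 'I_n.+1 => Ordinal (mlt k)).
  move=> j k /(congr1 val) /= ejk; apply/val_inj/eqP/negPn/negP => jk.
  have := hd j k (ltn_ord j) (ltn_ord k) jk.
  move/seteqP => [+ _] => /(_ (iter (m j) T x)); apply.
  by split; [apply: hmk|rewrite ejk; apply: hmk].
by have := @leq_card _ _ _ hinj; rewrite !card_ord ltnn.
Qed.

Unset Implicit Arguments.
Theorem proposition6p4 (R : realType) (X : topologicalLmodType R^o)
    (F : set (set nat)) (T : {linear X -> X}) :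
  polish R X ->
  infinite_dimensional X ->
  furstenberg_family F ->
  continuous T ->
  hereditarily_F_hypercyclic F T ->
  forall (I : Type) (A : I -> set nat) (V : I -> set X),
    countable [set: I] ->
    (forall i, F (A i)) ->
    (forall i, open (V i) /\ V i !=set0) ->
    dense [set x : X | forall i, F (return_set T x (V i) `&` A i)].
Proof.
move=> [_ [d [md [mt _]]]] idim ff cT hh I A V cI FA hV W W0 oW.
have v0 : exists v : X, v != 0.
  have [v hv] := idim 0%N (fun _ => 0); exists v; apply/eqP => v0; apply: hv.
  by exists (fun _ => 0); rewrite big_ord0.
have hD := disjP md mt v0.
case: (pselect (exists i : I, True)) => [[i0 _]|noI]; last first.
  case: W0 => w Ww; exists w; split => // i; exfalso; apply: noI; by exists i.
have rng := rangeP ff hh hD.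
have cont : forall n, continuous (iter n T).
  elim=> [|n IH] x /=; first exact: cvg_id.
  exact: (continuous_comp (IH x) (cT _)).
have cJ : countable [set: option (I * nat)].
  move/countable_injP: cI => [f finj]; apply/countable_injP.
  exists (fun j => match j with None => 0%N | Some (i, n) => (pickle (f i, n)).+1 end).
  move=> [[i n]|] [[i' n']|] _ _ //= [] /(pcan_inj pickleK_inv) [] /finj.
  by rewrite !in_setT => /(_ isT isT) -> ->.
pose V' := fun j : option (I * nat) => match j with None => W | Some (i, n) => iter n T @^-1` V i end.
pose A' := fun j : option (I * nat) => match j with None => A i0 | Some (i, _) => A i end.
have hV' : forall j, open (V' j) /\ V' j !=set0.
  case=> [[i n]|] /=; last by split.
  split; first by apply: (proj1 (continuousP _) (cont n)); exact: (hV i).1.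
  have [z hz] := rng n (V i) (A i) (hV i).1 (hV i).2 (FA i).
  by exists z.
have hA' : forall j, F (A' j) by case=> [[i n]|]; apply: FA.
have [x hx] := hh _ V' A' cJ hV' hA'.
have [n [Wn _]] := ff.1 _ (hx None).
exists (iter n T x); split => // i.
apply: ff.2 (hx (Some (i, n))) _ => m /= [h1 h2]; split => //.
by rewrite /return_set /= -iterD addnC iterD.
Qed.
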